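(* Let $G$ be a finite graph. If there are integers $a\ge 0$ and $b\ge 2$ such that $\phi^a_b(G)\ge 2\chi(G)$, then $\chi_c(G)=\chi(G)$.
   Context: $\chi_c(G)$ is the circular chromatic number: the minimum of $n/d$ such that $G$ has a homomorphism to the circular complete graph $K_{n/d}$ (vertices $0,\dots,n-1$, $i\sim j$ iff $d\le|i-j|\le n-d$). An independent set $F$ of $G$ is free if it is contained in at least two distinct maximal independent sets; an edge $uv$ supports $F$ if $F\cap(N(u)\cup N(v))=\emptyset$. For integers $a\ge0,b\ge1$, $\phi^a_b(G)$ is the minimum $t$ such that $V(G)$ is partitioned into independent sets $V_1,\dots,V_t$ with $V_1,\dots,V_{t-a}$ free, and there are edges $e_1,\dots,e_{t-a}$ (not necessarily distinct) with $e_i$ supporting $V_i$ and every vertex incident with at most $b$ of $e_1,\dots,e_{t-a}$; $\phi^a_b(G)=\infty$ if no such $t$ exists. *)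

(* Defs.v *)
(* Finite simple graphs are given as a symmetric,
   irreflexive relation e : rel V on a finType V. *)
From Stdlib Require Import ClassicalEpsilon.
From mathcomp Require Import all_boot all_order all_algebra.
Set Implicit Arguments. Unset Strict Implicit. Unset Printing Implicit Defensive.
Import Order.TTheory GRing.Theory Num.Theory.

Section Graphs.
Variables (V : finType) (e : rel V).

Definition colorable (k : nat) : bool :=
  [exists f : {ffun V -> 'I_k}, [forall x, forall y, e x y ==> (f x != f y)]].

(* chi = least k admitting a proper k-colouring (always exists for loopless
   graphs; the fallback 0 is never used there). *)
Definition chi : nat :=
  match excluded_middle_informative (exists k, colorable k) with
  | left H => ex_minn H
  | right _ => 0%N
  end.

Definition cdist (i j : nat) : nat := maxn i j - minn i j.

(* adjacency in the circular complete graph K_{n/d} on {0,..,n-1} *)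
Definition circ_adj (n d : nat) (i j : nat) : bool :=
  (d <= cdist i j) && (cdist i j <= n - d).

Definition circ_hom (n d : nat) : bool :=
  [exists f : {ffun V -> 'I_n},
     [forall x, forall y, e x y ==> circ_adj n d (f x) (f y)]].

Definition is_circ_chrom (r : rat) : Prop :=
  (exists n d : nat, [/\ (0 < d <= n)%N, circ_hom n d & r = (n%:R / d%:R)%R])
  /\ (forall n d : nat, (0 < d <= n)%N -> circ_hom n d -> (r <= n%:R / d%:R)%R).

Definition independent (F : {set V}) : bool :=
  [forall x in F, forall y in F, ~~ e x y].

Definition max_independent (M : {set V}) : bool := maxset independent M.

Definition free (F : {set V}) : bool :=
  independent F &&
  [exists M1 : {set V}, exists M2 : {set V},
     [&& max_independent M1, max_independent M2, M1 != M2,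
         F \subset M1 & F \subset M2]].

Definition nbhd (u : V) : {set V} := [set y | e u y].

Definition supports (uv : V * V) (F : {set V}) : bool :=
  e uv.1 uv.2 && (F :&: (nbhd uv.1 :|: nbhd uv.2) == set0).

(* phi^a_b-witness with t parts: parts P 0 .. P (t-1) (the paper's
   V_1..V_t), free parts are those of index < t - a (truncated subtraction:
   none if t <= a), each supported by the edge E i, and each vertex is
   incident with at most b of the edges E i, i < t - a (with multiplicity). *)
Definition phi_feasible (a b t : nat) : bool :=
  [exists P : {ffun 'I_t -> {set V}}, exists E : {ffun 'I_t -> V * V},
    [&& [forall i, independent (P i)],
        [forall x, exists i, x \in P i],
        [forall i, forall j, (i != j) ==> [disjoint P i & P j]],
        [forall i : 'I_t, ((i : nat) < t - a)%N ==> free (P i) && supports (E i) (P i)]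
      & [forall x, #|[set i : 'I_t | ((i : nat) < t - a)%N &&
                       ((x == (E i).1) || (x == (E i).2))]| <= b]]].

(* phi^a_b(G) : Some (minimum t) or None (= infinity) *)
Definition phi (a b : nat) : option nat :=
  match excluded_middle_informative (exists t, phi_feasible a b t) with
  | left H => Some (ex_minn H)
  | right _ => None
  end.

End Graphs.

(* comparison k <= o in the extended naturals (None = infinity) *)
Definition ext_geq (o : option nat) (k : nat) : bool :=
  if o is Some p then (k <= p)%N else true.

(* Main.v *)
From Stdlib Require Import ClassicalEpsilon.
Require Import Defs.
From mathcomp Require Import all_boot all_order all_algebra.
From mathcomp Require Import zify.
Set Implicit Arguments. Unset Strict Implicit. Unset Printing Implicit Defensive.


Lemma cdistC a b : cdist a b = cdist b a.
Proof. by rewrite /cdist maxnC minnC. Qed.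

Lemma cdist_le a b : a <= b -> cdist a b = b - a.
Proof. move=> h; rewrite /cdist; lia. Qed.

Lemma circ_adjC n d a b : circ_adj n d a b = circ_adj n d b a.
Proof. by rewrite /circ_adj cdistC. Qed.

Lemma ar1 (N d' N' d i A : nat) : N * d' = N' * d + 1 -> i * d' + 1 = (A + 1) * d ->
  i * N' * d + (i + N) = N * (A + 1) * d.
Proof. move=> h1 h2. nia. Qed.

Lemma ar2 (j d' d i N A r N' : nat) : (j + d + 1) * d' <= (i + N) * d' -> N * d' = N' * d + 1 ->
 i * d' = A * d + r -> r < d -> 0 < d' -> d' * d + j * d' < (A + N' + 1) * d.
Proof. move=> *. lia. Qed.

Lemma ar3 (j d' d i N A r N' : nat) : (j + d) * d' = (i + N) * d' -> N * d' = N' * d + 1 ->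
 i * d' = A * d + r -> r.+1 < d -> d' * d + j * d' < (A + N' + 1) * d.
Proof. move=> *. lia. Qed.

Lemma ar4 (i N d' N' d : nat) : i < N -> 2 <= d' -> N * d' = N' * d + 1 -> i * d' < N' * d.
Proof.
move=> h1 h2 h3; have : i.+1 * d' <= N * d' by apply: leq_mul.
lia.
Qed.

Section Farey.
Variables (N d N' d' : nat).
Hypothesis hd : 2 <= d.
Hypothesis hd' : 0 < d'.
Hypothesis heq : N * d' = N' * d + 1.

Let j0 := N - N %% d.

Lemma farey_lt i : i < N -> i != j0 -> i * d' %/ d < N'.
Proof.
move=> hi hij; rewrite ltn_divLR; last lia.
case: (leqP 2 d') => h2; first exact: (ar4 hi h2 heq).
have e1 : d' = 1 by lia.
have heq1 := heq; rewrite e1 muln1 in heq1 *.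
have : N %% d = 1.
  by rewrite heq1 modnMDl modn_small //; lia.
move=> hr; move: hij; rewrite /j0 hr => /eqP hij; lia.
Qed.

Lemma div2d x : d %| x -> 0 < x -> x < d + d -> x = d.
Proof. by case/dvdnP=> m ->; case: m => [|[|m]] /=; nia. Qed.

Lemma farey_adj i j : i < N -> j < N -> i != j0 -> j != j0 ->
  circ_adj N d i j -> circ_adj N' d' (i * d' %/ d) (j * d' %/ d).
Proof.
wlog ij : i j / i <= j.
  move=> H hi hj hi0 hj0; case: (leqP i j) => [|/ltnW] h; first exact: H.
  by rewrite circ_adjC [circ_adj N' _ _ _]circ_adjC => hc; apply: H.
move=> hi hj hi0 hj0; rewrite /circ_adj cdist_le // => /andP[h1 h2].
have d0 : 0 < d by lia.
have eA := divn_eq (i * d') d; have rA := ltn_pmod (i * d') d0.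
set A := i * d' %/ d in eA *; set r := i * d' %% d in eA rA.
have lAB : A <= j * d' %/ d by apply: leq_div2r; apply: leq_mul.
have low : A + d' <= j * d' %/ d.
  have : (d' * d + i * d') %/ d <= j * d' %/ d.
    apply: leq_div2r; have : (i + d) * d' <= j * d' by apply: leq_mul; lia.
    lia.
  by rewrite divnMDl //; lia.
have up : j * d' %/ d + d' <= A + N'.
  suff key : d' * d + j * d' < (A + N' + 1) * d.
    by move: key; rewrite -ltn_divLR // divnMDl // addnC; lia.
  case: (ltnP (j - i) (N - d)) => hji.
    apply: (ar2 (i := i) (N := N) _ heq eA rA hd').
    by apply: leq_mul; lia.
  have ejN : j + d = i + N by lia.
  case: (eqVneq r d.-1) => hr; last first.
    apply: (ar3 (i := i) (N := N) _ heq eA); first by rewrite ejN.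
    lia.
  exfalso; move/eqP: hj0; apply.
  have hdiv : d %| i + N.
    have E : i * N' * d + (i + N) = N * (A + 1) * d.
      by apply: (ar1 heq); rewrite eA hr; lia.
    have : d %| N * (A + 1) * d by apply: dvdn_mull.
    by rewrite -E dvdn_addr // dvdn_mull.
  have eN := divn_eq N d; have rN := ltn_pmod N d0.
  have rN0 : 0 < N %% d.
    rewrite lt0n; apply/negP=> /eqP hz.
    have : d %| N * d' by rewrite dvdn_mulr // /dvdn hz.
    rewrite heq dvdn_addr ?dvdn_mull // dvdn1; lia.
  have hdiv2 : d %| i + N %% d.
    move: hdiv; rewrite {1}eN.
    have -> : i + (N %/ d * d + N %% d) = (i + N %% d) + N %/ d * d by lia.
    by rewrite dvdn_addl // dvdn_mull.
  have hi_lt : i < d by clear -ejN hj; lia.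
  have h5 : i + N %% d = d.
    by apply: div2d => //; clear -rN0 rN hi_lt; lia.
  by rewrite /j0; clear -h5 ejN; lia.
rewrite cdist_le //; move: low up; clearbody A; clear -A; move=> low up.
apply/andP; split; lia.
Qed.

End Farey.


Lemma mod2 x n : x < n + n -> x %% n = if x < n then x else x - n.
Proof.
move=> h; case: ifP => h2; first by rewrite modn_small.
have -> : x = (x - n) + n by lia.
by rewrite modnDr modn_small; lia.
Qed.

Lemma adj_rot n d i j s : i < n -> j < n -> circ_adj n d i j ->
  circ_adj n d ((i + s) %% n) ((j + s) %% n).
Proof.
move=> hi hj; rewrite -(modnDmr i) -(modnDmr j).
have hs : s %% n < n by rewrite ltn_pmod //; lia.
move: (s %% n) hs => t ht.
rewrite !mod2; try lia.
rewrite /circ_adj /cdist; case: ifP; case: ifP; move=> h1 h2 /andP[h3 h4]; apply/andP; lia.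
Qed.

Lemma adj_shift n d p b : p < n -> b < n -> 2 <= d -> circ_adj n d p b ->
  b != (p + d) %% n -> circ_adj n d ((p + 1) %% n) b.
Proof.
move=> hp hb hd; rewrite /circ_adj /cdist => /andP[h3 h4] /eqP h5.
rewrite (mod2 (x := p + 1)) in h5 *; last lia.
rewrite (mod2 (x := p + d)) in h5; last lia.
move: h5; case: ifP; case: ifP; move=> h1 h2 h5; apply/andP; lia.
Qed.

Lemma div_dist a b g D E : 0 < g -> D * g <= cdist a b <= E * g ->
  D <= cdist (a %/ g) (b %/ g) <= E.
Proof.
move=> g0; wlog ab : a b / a <= b.
  move=> H; case: (leqP a b) => [|/ltnW] h; first exact: H.
  by rewrite cdistC [cdist (a %/ g) _]cdistC; apply: H.
rewrite cdist_le // cdist_le ?leq_div2r // => /andP[h1 h2].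
have l1 : (D * g + a) %/ g <= b %/ g by apply: leq_div2r; lia.
have l2 : b %/ g <= (E * g + a) %/ g by apply: leq_div2r; lia.
rewrite !divnMDl // in l1 l2; lia.
Qed.


Section Main.
Variables (V : finType) (e : rel V).
Hypothesis e_sym : symmetric e.
Hypothesis e_irr : irreflexive e.

Lemma chi_spec : colorable e (chi e) /\ forall m, colorable e m -> chi e <= m.
Proof.
rewrite /chi; case: excluded_middle_informative => [H|H].
  by case: ex_minnP => m Hm Hmin; split.
exfalso; apply: H; exists #|V|; apply/existsP.
exists [ffun x => enum_rank x]; apply/forallP=> x; apply/forallP=> y.
apply/implyP=> exy; rewrite !ffunE; apply/negP=> /eqP /enum_rank_inj exy'.
by rewrite exy' e_irr in exy.
Qed.

Definition good n d (f : V -> nat) :=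
  (forall x, f x < n) /\ (forall x y, e x y -> circ_adj n d (f x) (f y)).

Lemma circ_homP n d : circ_hom e n d <-> exists f, good n d f.
Proof.
split.
  case/existsP=> g /forallP Hg; exists (fun x => nat_of_ord (g x)); split=> [x|x y exy].
    exact: ltn_ord.
  by move: (Hg x) => /forallP /(_ y) /implyP; apply.
case=> f [Hlt Hadj]; apply/existsP.
exists [ffun x => Ordinal (Hlt x)]; apply/forallP=> x; apply/forallP=> y.
by apply/implyP=> exy; rewrite !ffunE /=; apply: Hadj.
Qed.

Lemma good_div n d f g : 0 < g -> g %| n -> g %| d -> good n d f ->
  good (n %/ g) (d %/ g) (fun x => f x %/ g).
Proof.
move=> g0 /dvdnP[n0 ->] /dvdnP[d0 ->] [Hlt Hadj]; rewrite !mulnK //; split=> [x|x y exy].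
  by rewrite ltn_divLR //; apply: Hlt.
apply: (div_dist g0); move: (Hadj x y exy); rewrite /circ_adj -mulnBl.
by [].
Qed.

Lemma good_rot n d f s : good n d f -> good n d (fun x => (f x + s) %% n).
Proof.
case=> Hlt Hadj; split=> [x|x y exy].
  by rewrite ltn_pmod //; have := Hlt x; lia.
by apply: adj_rot; [apply: Hlt| apply: Hlt| apply: Hadj].
Qed.

Lemma good_farey N d N' d' f : 2 <= d -> 0 < d' -> N * d' = N' * d + 1 ->
  good N d f -> (forall x, f x != N - N %% d) ->
  good N' d' (fun x => f x * d' %/ d).
Proof.
move=> hd hd' heq [Hlt Hadj] Hne; split=> [x|x y exy].
  by apply: (farey_lt hd hd' heq); [apply: Hlt | apply: Hne].
by apply: (farey_adj hd hd' heq); [apply: Hlt | apply: Hlt | apply: Hne | apply: Hne | apply: Hadj].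
Qed.

Definition shiftc N p (f : V -> nat) x := if f x == p then (p + 1) %% N else f x.

Lemma good_shift N d p f : 2 <= d -> 1 < N -> p < N -> good N d f ->
  (forall x y, e x y -> f x = p -> f y != (p + d) %% N) ->
  good N d (shiftc N p f) /\ (forall x, shiftc N p f x != p).
Proof.
move=> hd hN hp [Hlt Hadj] Hno.
split; [split|] => [x|x y exy|x]; rewrite /shiftc.
- by case: ifP => _; [rewrite ltn_pmod //; lia | apply: Hlt].
- case: (eqVneq (f x) p) => hx; case: (eqVneq (f y) p) => hy.
  + by move: (Hadj x y exy); rewrite hx hy /circ_adj /cdist; lia.
  + apply: adj_shift => //; first by rewrite -hx; apply: Hadj.
    exact: (Hno x y exy hx).
  + rewrite circ_adjC; apply: adj_shift => //; first by rewrite -hy circ_adjC; apply: Hadj.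
    by apply: (Hno y x _ hy); rewrite e_sym.
  + by apply: Hadj.
- case: ifP => [_|/negbT //]; rewrite (mod2 (x := p + 1)); last lia.
  case: ifP => h; apply/eqP; lia.
Qed.
End Main.



Lemma ar5 (N d a s : nat) : 0 < N -> a < d -> 1 + a * N = s * d -> s <= N.
Proof. move=> *; nia. Qed.

Lemma ar6 (N d a s : nat) : s <= N -> a <= d -> 1 + a * N = s * d ->
  N * (d - a) = (N - s) * d + 1.
Proof. move=> h1 h2 h3; rewrite !mulnBr !mulnBl; nia. Qed.

Lemma ar7 (N d N' d' k : nat) : N * d' = N' * d + 1 -> d + d <= N -> 0 < d' -> 2 <= d ->
  N < k * d -> d' <= N' /\ N' < k * d'.
Proof. move=> *; split; nia. Qed.

Section Core.
Variables (V : finType) (e : rel V).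
Hypothesis e_sym : symmetric e.
Hypothesis e_irr : irreflexive e.
Let k := chi e.
Variables (N d : nat) (f : V -> nat).
Hypothesis Hf : good e N d f.
Hypothesis Hd : 0 < d <= N.
Hypothesis HNk : N < k * d.
Hypothesis Hmin : forall n' d', 0 < d' <= n' -> n' < k * d' -> (exists g, good e n' d' g) -> N <= n'.

Lemma core_d2 : 2 <= d.
Proof.
case: (leqP 2 d) => // hd1.
have d1 : d = 1 by lia.
have : colorable e N.
  case: Hf => Hlt Hadj; apply/existsP; exists [ffun x => Ordinal (Hlt x)].
  apply/forallP=> x; apply/forallP=> y; apply/implyP=> exy; rewrite !ffunE.
  move: (Hadj x y exy); rewrite d1 /circ_adj /cdist => /andP[h1 _].
  apply/negP=> /eqP [] h; move: h1; rewrite h; lia.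
move=> /(proj2 (chi_spec e_irr)); rewrite -/k; lia.
Qed.

Lemma core_edge : exists x y, e x y.
Proof.
case: (boolP [exists x, exists y, e x y]).
  by case/existsP=> x /existsP[y exy]; exists x, y.
rewrite negb_exists => /forallP H.
have : colorable e 1.
  apply/existsP; exists [ffun x => @ord0 0].
  apply/forallP=> x; apply/forallP=> y; apply/implyP=> exy.
  by move: (H x); rewrite negb_exists => /forallP /(_ y); rewrite exy.
move=> /(proj2 (chi_spec e_irr)); rewrite -/k => hk.
have : k * d <= d by rewrite -[X in _ <= X]mul1n leq_mul2r hk orbT.
lia.
Qed.

Lemma core_2d : d + d <= N.
Proof.
case: core_edge => x [y exy]; case: Hf => Hlt Hadj.
move: (Hadj x y exy) (Hlt x) (Hlt y); rewrite /circ_adj /cdist; lia.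
Qed.

Lemma core_coprime : coprime N d.
Proof.
rewrite /coprime; apply/negPn/negP => hg.
set g := gcdn N d in hg.
have g0 : 0 < g by rewrite gcdn_gt0; lia.
have g2 : 2 <= g by lia.
have hgN : g %| N := dvdn_gcdl N d.
have hgd : g %| d := dvdn_gcdr N d.
have Hg := good_div g0 hgN hgd Hf.
move: hgN hgd Hg => /dvdnP[N0 eN] /dvdnP[d0 ed].
rewrite eN ed !mulnK // => Hg.
have : N <= N0.
  apply: (Hmin (d' := d0)); last by exists (fun x => f x %/ g).
    apply/andP; split.
      by move: Hd; rewrite ed; nia.
    by move: Hd; rewrite eN ed leq_pmul2r //; lia.
  by move: HNk; rewrite eN ed mulnA ltn_pmul2r.
rewrite eN; move: Hd; rewrite eN; nia.
Qed.

Lemma core_surj h : good e N d h -> forall q, q < N -> exists x, h x = q.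
Proof.
move=> Hh q hq; case: (boolP [exists x, h x == q]) => [/existsP[x /eqP]|H]; first by exists x.
exfalso; have Hne : forall x, h x != q by move=> x; apply/negP=> hx; move/negP: H; apply; apply/existsP; exists x.
have hd2 := core_d2; have h2d := core_2d; have cop := core_coprime.
have d0 : 0 < d by lia.
case: (Bezoutl N d0) => a ha; rewrite gcdnC (eqP cop) => /dvdnP[s hs].
have hN0 : 0 < N by lia.
have hsN : s <= N := ar5 hN0 ha hs.
have heq := ar6 hsN (ltnW ha) hs.
have a0 : 0 < a.
  rewrite lt0n; apply/negP => /eqP az; move: hs; rewrite az mul0n addn0 => hs'.
  have : d %| 1 by rewrite hs' dvdn_mull.
  by rewrite dvdn1; lia.
have rpos : 0 < N %% d.
  rewrite lt0n; apply/negP=> /eqP hz.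
  have : d %| gcdn N d by rewrite dvdn_gcd dvdnn /dvdn hz.
  by rewrite (eqP cop) dvdn1; lia.
have rlt : N %% d < d by rewrite ltn_pmod.
set j0 := N - N %% d.
have hj0 : j0 < N by rewrite /j0; lia.
set sh := j0 + N - q.
have Hr := good_rot sh Hh.
have Hne' : forall x, (h x + sh) %% N != N - N %% d.
  move=> x; apply/negP => /eqP hx.
  have : (h x + sh == q + sh %[mod N]).
    rewrite hx /sh; have -> : q + (j0 + N - q) = j0 + N by lia.
    by rewrite modnDr (modn_small hj0).
  rewrite eqn_modDr !modn_small //; last by case: Hh.
  by move/eqP => hx'; move: (Hne x); rewrite hx' eqxx.
have d'0 : 0 < d - a by lia.
have Hfa := good_farey hd2 d'0 heq Hr Hne'.
have [h1 h2] := ar7 heq h2d d'0 hd2 HNk.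
have : N <= N - s.
  by apply: (Hmin (d' := d - a)); [lia | exact: h2 | exists (fun x => (h x + sh) %% N * (d - a) %/ d)].
have : 0 < s by move: hs; nia.
lia.
Qed.

Lemma core_tight p : p < N -> exists x y, [/\ e x y, f x = p & f y = (p + d) %% N].
Proof.
move=> hp.
case: (boolP [exists x, exists y, e x y && (f x == p) && (f y == (p + d) %% N)]).
  by case/existsP=> x /existsP[y /andP[/andP[exy /eqP fx] /eqP fy]]; exists x, y.
move=> H; exfalso.
have Hno : forall x y, e x y -> f x = p -> f y != (p + d) %% N.
  move=> x y exy fx; apply/negP=> fy; move/negP: H; apply.
  by apply/existsP; exists x; apply/existsP; exists y; rewrite exy fx eqxx fy.
have hd2 := core_d2; have h2d := core_2d.
have [Hs Hnp] := good_shift e_sym (ltac:(lia) : 2 <= d) (ltac:(lia) : 1 < N) hp Hf Hno.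
case: (core_surj Hs hp) => x hx.
by move: (Hnp x); rewrite hx eqxx.
Qed.
End Core.


Section Free.
Variables (V : finType) (e : rel V).
Hypothesis e_sym : symmetric e.
Hypothesis e_irr : irreflexive e.

Lemma indepU1 F u : independent e F -> (forall w, w \in F -> ~~ e u w) ->
  independent e (u |: F).
Proof.
move=> /forall_inP HF Hu; apply/forall_inP => x; rewrite in_setU1 => hx.
apply/forall_inP => y; rewrite in_setU1 => hy.
case/orP: hx => [/eqP ->|hx]; case/orP: hy => [/eqP ->|hy].
- by rewrite e_irr.
- exact: Hu.
- by rewrite e_sym; apply: Hu.
- by move: (HF x hx) => /forall_inP; apply.
Qed.

Lemma supp_free F uv : independent e F -> supports e uv F -> Defs.free e F.
Proof.
case: uv => u v /= HF /andP[/= euv /eqP Hs].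
have Hu : forall w, w \in F -> ~~ e u w.
  move=> w hw; apply/negP => euw.
  have : w \in F :&: (nbhd e u :|: nbhd e v) by rewrite !inE hw euw.
  by rewrite Hs inE.
have Hv : forall w, w \in F -> ~~ e v w.
  move=> w hw; apply/negP => evw.
  have : w \in F :&: (nbhd e u :|: nbhd e v) by rewrite !inE hw evw orbT.
  by rewrite Hs inE.
rewrite /Defs.free HF /=.
case: (maxset_exists (indepU1 HF Hu)) => M1 hM1 sM1.
case: (maxset_exists (indepU1 HF Hv)) => M2 hM2 sM2.
apply/existsP; exists M1; apply/existsP; exists M2.
rewrite /max_independent hM1 hM2 /=.
rewrite (subset_trans (subsetUr _ _) sM1) (subset_trans (subsetUr _ _) sM2) !andbT.
apply/negP => /eqP eM.
have uM : u \in M1 by apply: (subsetP sM1); rewrite in_setU1 eqxx.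
have vM : v \in M1 by rewrite eM; apply: (subsetP sM2); rewrite in_setU1 eqxx.
move/maxsetP: hM1 => [/forall_inP HM _].
by move: (HM u uM) => /forall_inP /(_ v vM); rewrite euv.
Qed.
End Free.


Lemma win_arith N d j fw p : 2 <= d -> d + d <= N -> fw < N ->
  j * d.-1 <= fw < j * d.-1 + d.-1 -> j * d.-1 <= N.-1 ->
  p = (if j == 0 then N.-1 else j * d.-1 - 1) ->
  ~~ circ_adj N d p fw && ~~ circ_adj N d ((p + d) %% N) fw.
Proof.
move=> hd hN hf /andP[h1 h2] h3 ->.
case: (eqVneq j 0) => hj.
  move: h1 h2; rewrite hj mul0n => h1 h2.
  rewrite (mod2 (x := N.-1 + d)); last lia.
  rewrite /circ_adj /cdist; case: ifP => h4; apply/andP; split; apply/negP => /andP[]; lia.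
have hm : d.-1 <= j * d.-1 by rewrite leq_pmull; lia.
move: h1 h2 h3 hm; move: (j * d.-1) => m h1 h2 h3 hm.
rewrite (mod2 (x := m - 1 + d)); last lia.
rewrite /circ_adj /cdist; case: ifP => h4; apply/andP; split; apply/negP => /andP[]; lia.
Qed.

Section Constr.
Variables (V : finType) (e : rel V).
Hypothesis e_sym : symmetric e.
Hypothesis e_irr : irreflexive e.
Variables (N d : nat) (f : V -> nat) (x0 : V).
Hypothesis Hf : good e N d f.
Hypothesis hd : 2 <= d.
Hypothesis h2d : d + d <= N.
Hypothesis Htight : forall p, p < N -> exists x y, [/\ e x y, f x = p & f y = (p + d) %% N].

Definition tt := N.-1 %/ d.-1 + 1.
Definition pos (j : nat) := if j == 0 then N.-1 else j * d.-1 - 1.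

Lemma dm0 : 0 < d.-1. Proof. lia. Qed.

Lemma jbound (j : nat) : j < tt -> j * d.-1 <= N.-1.
Proof. by rewrite /tt addn1 ltnS leq_divRL //; exact: dm0. Qed.

Lemma pos_lt (j : nat) : j < tt -> pos j < N.
Proof. move/jbound; rewrite /pos; case: ifP => _; lia. Qed.

Lemma pos_inj (i j : nat) : i < tt -> j < tt -> pos i = pos j -> i = j.
Proof.
move=> /jbound hi /jbound hj; rewrite /pos.
have m0 := dm0.
case: (eqVneq i 0) => hi0; case: (eqVneq j 0) => hj0.
- by rewrite hi0 hj0.
- have : d.-1 <= j * d.-1 by rewrite leq_pmull; lia.
  lia.
- have : d.-1 <= i * d.-1 by rewrite leq_pmull; lia.
  lia.
- have : d.-1 <= j * d.-1 by rewrite leq_pmull; lia.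
  have : d.-1 <= i * d.-1 by rewrite leq_pmull; lia.
  move=> h1 h2 h3; apply/eqP; rewrite -(eqn_pmul2r m0); apply/eqP; lia.
Qed.

Definition Epick (j : nat) : V * V :=
  odflt (x0, x0) [pick uv : V * V | e uv.1 uv.2 && (f uv.1 == pos j) && (f uv.2 == (pos j + d) %% N)].

Lemma EpickP (j : nat) : j < tt ->
  [/\ e (Epick j).1 (Epick j).2, f (Epick j).1 = pos j & f (Epick j).2 = (pos j + d) %% N].
Proof.
move=> hj; rewrite /Epick; case: pickP => [uv /andP[/andP[h1 /eqP h2] /eqP h3]|H] //=.
case: (Htight (pos_lt hj)) => x [y [exy fx fy]].
by move: (H (x, y)); rewrite /= exy fx fy !eqxx.
Qed.

Definition Pt := [ffun j : 'I_tt => [set v | f v %/ d.-1 == j]].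
Definition Et := [ffun j : 'I_tt => Epick j].

Lemma card_inj1 (g : 'I_tt -> nat) c : (forall i j, g i = g j -> i = j) ->
  #|[set i | c == g i]| <= 1.
Proof.
move=> Hg; rewrite leqNgt; apply/negP => /card_gt1P [i [j [hi hj hij]]].
move: hi hj; rewrite !inE => /eqP hi /eqP hj.
by move: hij; rewrite (Hg i j) ?eqxx // -hi -hj.
Qed.

Lemma Pt_indep i : independent e (Pt i).
Proof.
case: Hf => Hlt Hadj; have m0 := dm0.
rewrite ffunE; apply/forall_inP => u; rewrite inE => /eqP hu.
apply/forall_inP => v; rewrite inE => /eqP hv; apply/negP => euv.
move: (Hadj u v euv).
have eu := divn_eq (f u) d.-1; have ev := divn_eq (f v) d.-1.
have ru := ltn_pmod (f u) m0; have rv := ltn_pmod (f v) m0.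
rewrite hu in eu; rewrite hv in ev.
move: eu ev ru rv; move: (f u %% d.-1) (f v %% d.-1) (i * d.-1) => ru rv m -> -> h1 h2.
rewrite /circ_adj /cdist => /andP[]; lia.
Qed.

Lemma feasible a b : 2 <= b -> phi_feasible e a b tt.
Proof.
move=> hb; case: Hf => Hlt Hadj; have m0 := dm0.
apply/existsP; exists Pt; apply/existsP; exists Et; apply/and5P; split.
- by apply/forallP => i; apply: Pt_indep.
- apply/forallP => x; apply/existsP.
  have hx : f x %/ d.-1 < tt.
    rewrite /tt addn1 ltnS; apply: leq_div2r; have := Hlt x; lia.
  by exists (Ordinal hx); rewrite ffunE inE.
- apply/forallP => i; apply/forallP => j; apply/implyP => hij.
  rewrite -setI_eq0; apply/eqP/setP => v; rewrite !ffunE !inE.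
  apply/negP => /andP[/eqP h1 /eqP h2]; move: hij; rewrite (_ : i = j) ?eqxx //.
  by apply: val_inj; rewrite /= -h1 -h2.
- apply/forallP => i; apply/implyP => _.
  have [h1 h2 h3] := EpickP (ltn_ord i).
  have Hsupp : supports e (Et i) (Pt i).
    rewrite /supports ffunE h1 /=; apply/eqP/setP => w; rewrite !ffunE !inE.
    apply/negP => /andP[/eqP hw hn].
    have := win_arith (j := i) (fw := f w) hd h2d (Hlt w) _ (jbound (ltn_ord i)) (erefl (pos i)).
    have ew := divn_eq (f w) d.-1; have rw := ltn_pmod (f w) m0.
    rewrite hw in ew.
    move=> /(_ ltac:(lia)); rewrite -h3 -h2 /=.
    case/orP: hn => he; rewrite (Hadj _ _ he) ?andbF //.
  rewrite Hsupp andbT; apply: (supp_free e_sym e_irr (uv := Et i)) => //.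
  exact: Pt_indep.
- apply/forallP => x.
  have Hinj1 : forall i j : 'I_tt, pos i = pos j -> i = j.
    by move=> i j h; apply: val_inj; exact: (pos_inj (ltn_ord i) (ltn_ord j) h).
  have Hinj2 : forall i j : 'I_tt, (pos i + d) %% N = (pos j + d) %% N -> i = j.
    move=> i j /eqP h; apply: Hinj1; move: h.
    by rewrite eqn_modDr !modn_small ?pos_lt // => /eqP.
  apply: leq_trans hb.
  apply: (@leq_trans #|[set i : 'I_tt | f x == pos i] :|: [set i : 'I_tt | f x == (pos i + d) %% N]|).
    apply: subset_leq_card; apply/subsetP => i; rewrite !inE => /andP[_].
    have [_ h2 h3] := EpickP (ltn_ord i).
    by rewrite ffunE; case/orP => /eqP ->; rewrite ?h2 ?h3 eqxx ?orbT.
  apply: leq_trans (leq_card_setU _ _) _.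
  by rewrite -[2]/(1 + 1) leq_add // card_inj1.
Qed.
End Constr.


Lemma tt_bound N d k : 2 <= d -> N < k * d -> tt N d < 2 * k.
Proof.
move=> hd hN; rewrite /tt.
have h : N.-1 < (2 * k).-1 * d.-1 by nia.
move: h; rewrite -ltn_divLR; last lia.
lia.
Qed.

Theorem mainTheorem7 (V : finType) (e : rel V)
  (e_sym : symmetric e) (e_irr : irreflexive e) (V_nonempty : (0 < #|V|)%N)
  (a b : nat) (hb : (2 <= b)%N)
  (Hphi : ext_geq (phi e a b) (2 * chi e)) :
  is_circ_chrom e ((chi e)%:R : rat).
Proof.
have [colk kmin] := chi_spec e_irr.
case/card_gt0P: V_nonempty => x0 _.
have k1 : 0 < chi e.
  rewrite lt0n; apply/negP => /eqP k0; move: colk; rewrite k0 => /existsP[g _].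
  by case: (g x0).
split.
  exists (chi e), 1; split.
  - by rewrite k1.
  - apply/circ_homP; case/existsP: colk => g /forallP Hg.
    exists (fun x => nat_of_ord (g x)); split=> [x|x y exy]; first exact: ltn_ord.
    move: (Hg x) => /forallP /(_ y); rewrite exy /= => hne.
    have := ltn_ord (g x); have := ltn_ord (g y).
    move: hne; rewrite /circ_adj /cdist -(inj_eq val_inj) /=; move: (val (g x)) (val (g y)) => u v /eqP huv hu hv.
    apply/andP; lia.
  - by rewrite GRing.divr1.
move=> n d /andP[d0 dn] hom.
rewrite Num.Theory.ler_pdivlMr ?Num.Theory.ltr0n // -GRing.natrM Num.Theory.ler_nat.
case: (leqP (chi e * d) n) => // hlt; exfalso.
set k := chi e in k1 hlt Hphi kmin colk.
pose P m := [exists d : 'I_m.+1, (0 < d) && (m < k * d) && circ_hom e m d].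
have exP : exists m, P m.
  have hdn : d < n.+1 by lia.
  by exists n; apply/existsP; exists (Ordinal hdn); rewrite /= d0 hlt hom.
case: (ex_minnP exP) => N /existsP[dd /andP[/andP[dd0 hNk] homN]] Hmin.
case/circ_homP: homN => f Hf.
have Hd : 0 < dd <= N by rewrite dd0 -ltnS ltn_ord.
have Hmin' : forall n' d', 0 < d' <= n' -> n' < k * d' ->
    (exists g, good e n' d' g) -> N <= n'.
  move=> n' d' /andP[h1 h2] h3 h4; apply: Hmin.
  have h2' : d' < n'.+1 by rewrite ltnS.
  by apply/existsP; exists (Ordinal h2'); rewrite /= h1 h3 /=; apply/circ_homP.
have hd2 := core_d2 e_irr Hf Hd hNk.
have h2d := core_2d e_irr Hf Hd hNk.
have Ht := core_tight e_sym e_irr Hf Hd hNk Hmin'.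
have Hfe := feasible e_sym e_irr x0 Hf hd2 h2d Ht a hb.
have hb2 := @tt_bound N dd k hd2 hNk.
move: Hphi; rewrite /phi; case: excluded_middle_informative => [H|H] /=.
  case: (ex_minnP H) => p _ /(_ _ Hfe) hp hk.
  lia.
by move=> _; apply: H; exists (tt N dd).
Qed.
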